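(* Let $\mathcal{C}$ be a prevariety over a finite alphabet $A$ and let $\alpha:A^*\to M$ be an $\mathit{SF}(\mathcal{C})$-morphism. There exists a $\mathcal{C}$-morphism $\eta:A^*\to N$ such that for every $u\in A^*$, if $\eta(u)$ is idempotent, then $(\alpha(u))^{\omega+1}=(\alpha(u))^{\omega}$.
   Context: Fix a finite alphabet $A$. A prevariety is a class of regular languages over $A$ containing $\emptyset$ and $A^*$, closed under union, intersection, complement, and under the quotients $u^{-1}L=\{w\mid uw\in L\}$ and $Lu^{-1}=\{w\mid wu\in L\}$. $\mathit{SF}(\mathcal{C})$ is the least class containing $\mathcal{C}$ and all $\{a\}$ ($a\in A$), closed under union, complement and concatenation. For a class $\mathcal{D}$, a $\mathcal{D}$-morphism is a surjective monoid morphism $\eta:A^*\to N$ onto a finite monoid $N$ such that every language $\eta^{-1}(F)$, $F\subseteq N$, belongs to $\mathcal{D}$. For a finite monoid $M$, $\omega$ denotes a positive integer such that $s^\omega$ is idempotent for every $s\in M$. *)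

(* Defs.v *)
From mathcomp Require Import all_boot.
Set Implicit Arguments. Unset Strict Implicit. Unset Printing Implicit Defensive.

Section Lang.
Variable A : finType.
Definition lang := seq A -> bool.
Definition lclass := lang -> Prop.

Definition regular (L : lang) : Prop :=
  exists (Q : finType) (q0 : Q) (delta : Q -> A -> Q) (F : pred Q),
    forall w, L w = F (foldl delta q0 w).

Definition lempty : lang := fun _ => false.
Definition lfull : lang := fun _ => true.
Definition lunion (L1 L2 : lang) : lang := fun w => L1 w || L2 w.
Definition linter (L1 L2 : lang) : lang := fun w => L1 w && L2 w.
Definition lcompl (L : lang) : lang := fun w => ~~ L w.
Definition lquotl (u : seq A) (L : lang) : lang := fun w => L (u ++ w).
Definition lquotr (L : lang) (u : seq A) : lang := fun w => L (w ++ u).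
Definition lletter (a : A) : lang := fun w => w == [:: a].
Definition lconcat (L1 L2 : lang) : lang :=
  fun w => [exists i : 'I_(size w).+1, L1 (take i w) && L2 (drop i w)].

Definition prevariety (C : lclass) : Prop :=
  (forall L, C L -> regular L) /\
  C lempty /\ C lfull /\
  (forall L1 L2, C L1 -> C L2 -> C (lunion L1 L2)) /\
  (forall L1 L2, C L1 -> C L2 -> C (linter L1 L2)) /\
  (forall L, C L -> C (lcompl L)) /\
  (forall u L, C L -> C (lquotl u L) /\ C (lquotr L u)).

Inductive SF (C : lclass) : lclass :=
  | SF_base L : C L -> SF C L
  | SF_letter a : SF C (lletter a)
  | SF_union L1 L2 : SF C L1 -> SF C L2 -> SF C (lunion L1 L2)
  | SF_compl L : SF C L -> SF C (lcompl L)
  | SF_concat L1 L2 : SF C L1 -> SF C L2 -> SF C (lconcat L1 L2).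

Definition monoid_laws (M : finType) (mul : M -> M -> M) (one : M) : Prop :=
  [/\ associative mul, left_id one mul & right_id one mul].

Definition mpow (M : Type) (mul : M -> M -> M) (one : M) (s : M) (n : nat) : M :=
  iter n (mul s) one.

Definition is_morphism_of (D : lclass) (M : finType) (mul : M -> M -> M)
    (one : M) (f : seq A -> M) : Prop :=
  [/\ f [::] = one,
      (forall u v, f (u ++ v) = mul (f u) (f v)),
      (forall m : M, exists w, f w = m) &
      (forall F : {set M}, D (fun w => f w \in F))].
End Lang.

(* Main.v *)
Require Import Defs.
From mathcomp Require Import all_boot zify.
From Stdlib Require Import ClassicalEpsilon FunctionalExtensionality.
Set Implicit Arguments. Unset Strict Implicit. Unset Printing Implicit Defensive.

Definition upow (A : Type) (u : seq A) n : seq A := iter n (cat u) [::].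

Lemma upowS (A : Type) (u : seq A) n : upow u n.+1 = u ++ upow u n.
Proof. by []. Qed.

Lemma upowD (A : Type) (u : seq A) a b : upow u (a + b) = upow u a ++ upow u b.
Proof. elim: a => [|a IH] //. by rewrite addSn upowS IH catA. Qed.

Lemma upow_mid (A : Type) (u : seq A) i j :
  upow u (i + j + 1) = upow u i ++ u ++ upow u j.
Proof. by rewrite -addnA addn1 upowD.
Qed.

Lemma cat_split (A : eqType) (a b c d : seq A) : a ++ b = c ++ d ->
  (exists m, c = a ++ m /\ b = m ++ d) \/ (exists m, a = c ++ m /\ d = m ++ b).
Proof.
elim: a c => [|x a IH] c /=.
  by move=> ->; left; exists c.
case: c => [|y c] /=.
  by move=> <-; right; exists (x :: a).
case=> -> /IH [[m [-> ->]]|[m [-> ->]]].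
  by left; exists m.
by right; exists m.
Qed.

Lemma pow_split (A : eqType) (u r m : seq A) n : 0 < n -> r ++ m = upow u n ->
  exists i j u1 u2, [/\ i + j + 1 = n, u = u1 ++ u2, r = upow u i ++ u1 &
                        m = u2 ++ upow u j].
Proof.
elim: n r m => [|n IH] // r m _; rewrite upowS => /cat_split [[m' [Hu Hm]]|[m' [Hr Hp]]].
  by exists 0, n, r, m'; rewrite add0n addn1.
case: n IH Hp => [|n] IH Hp.
  case: m' Hr Hp => [|? ?] // Hr; case: m => [|? ?] // _.
  by exists 0, 0, u, [::]; rewrite Hr cats0.
have [i [j [u1 [u2 [Hij Hu Hr' Hm]]]]] := IH m' m (ltn0Sn _) (esym Hp).
exists i.+1, j, u1, u2; split => //; first by rewrite !addSn Hij.
by rewrite Hr Hr' upowS catA.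
Qed.

Lemma three_split (A : eqType) (w1 w2 x u y : seq A) a : 0 < a ->
  w1 ++ w2 = x ++ upow u a ++ y ->
  [\/ exists m, x = w1 ++ m /\ w2 = m ++ upow u a ++ y,
      exists i j u1 u2, [/\ i + j + 1 = a, u = u1 ++ u2,
         w1 = x ++ upow u i ++ u1 & w2 = u2 ++ upow u j ++ y]
    | exists m, w1 = x ++ upow u a ++ m /\ y = m ++ w2].
Proof.
move=> Ha /cat_split [[m [Hx Hw2]]|[r [Hw1 Hr]]].
  by constructor 1; exists m.
move: Hr => /esym /cat_split [[m [Hp Hw2]]|[m [Hr Hy]]].
  have [i [j [u1 [u2 [Hij Hu Hr Hm]]]]] := pow_split Ha (esym Hp).
  constructor 2; exists i, j, u1, u2; split => //.
    by rewrite Hw1 Hr catA.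
  by rewrite Hw2 Hm catA.
by constructor 3; exists m; rewrite Hw1 Hr catA.
Qed.


Definition Qp (A : finType) (L : lang A) k (u : seq A) : Prop :=
  forall a b x y, k <= a -> k <= b -> L (x ++ upow u a ++ y) -> L (x ++ upow u b ++ y).

Lemma Qp_mono (A : finType) (L : lang A) k k' u : k <= k' -> Qp L k u -> Qp L k' u.
Proof. move=> Hk H a b x y Ha Hb; apply: H; exact: leq_trans Hk _. Qed.

Lemma Qp_eq (A : finType) (L : lang A) k u a b x y : Qp L k u -> k <= a -> k <= b ->
  L (x ++ upow u a ++ y) = L (x ++ upow u b ++ y).
Proof. by move=> H Ha Hb; apply/idP/idP; apply: H. Qed.

Lemma Qp_union (A : finType) (L1 L2 : lang A) k1 k2 u :
  Qp L1 k1 u -> Qp L2 k2 u -> Qp (lunion L1 L2) (maxn k1 k2) u.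
Proof.
move=> H1 H2 a b x y Ha Hb; rewrite /lunion => /orP [h|h]; apply/orP.
  by left; apply: (Qp_mono (leq_maxl k1 k2) H1) h.
by right; apply: (Qp_mono (leq_maxr k1 k2) H2) h.
Qed.

Lemma Qp_compl (A : finType) (L : lang A) k u : Qp L k u -> Qp (lcompl L) k u.
Proof.
by move=> H a b x y Ha Hb; rewrite /lcompl (Qp_eq x y H Ha Hb).
Qed.

Lemma Qp_letter (A : finType) (c : A) u : Qp (lletter c) 2 u.
Proof.
move=> a b x y Ha Hb; rewrite /lletter.
case: u => [|z u].
  suff E : forall n, upow [::] n = [::] :> seq A by rewrite !E.
  by elim=> //.
have Hs : forall n, n <= size (upow (z :: u) n).
  by elim=> // n IH; rewrite upowS size_cat /=; lia.
move=> /eqP /(congr1 size); rewrite !size_cat /= => E.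
have := Hs a; clear -Ha E; lia.
Qed.

Lemma lconcatP (A : finType) (L1 L2 : lang A) w :
  reflect (exists w1 w2, [/\ w = w1 ++ w2, L1 w1 & L2 w2]) (lconcat L1 L2 w).
Proof.
apply: (iffP existsP).
  case=> i /andP [h1 h2]; exists (take i w), (drop i w); split => //.
  by rewrite cat_take_drop.
case=> w1 [w2 [-> h1 h2]].
have Hi : size w1 < (size (w1 ++ w2)).+1 by rewrite ltnS size_cat leq_addr.
exists (Ordinal Hi) => /=; by rewrite take_size_cat // drop_size_cat // h1 h2.
Qed.

Lemma concat_mid (A : finType) (L1 L2 : lang A) x y u u1 u2 i j :
  u = u1 ++ u2 -> L1 (x ++ upow u i ++ u1) -> L2 (u2 ++ upow u j ++ y) ->
  lconcat L1 L2 (x ++ upow u (i + j + 1) ++ y).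
Proof.
move=> Hu h1 h2; apply/lconcatP; exists (x ++ upow u i ++ u1), (u2 ++ upow u j ++ y).
split => //; rewrite upow_mid {2}Hu -!catA //.
Qed.

Lemma Qp_concat (A : finType) (L1 L2 : lang A) k1 k2 u :
  Qp L1 k1 u -> Qp L2 k2 u -> Qp (lconcat L1 L2) (k1 + k2 + 1) u.
Proof.
move=> H1 H2 a b x y Ha Hb /lconcatP [w1 [w2 [E h1 h2]]].
have Ha0 : 0 < a by apply: leq_trans Ha; rewrite addn1.
have [[m [Hx Hw2]]|[i [j [u1 [u2 [Hij Hu Hw1 Hw2]]]]]|[m [Hw1 Hy]]] :=
  three_split Ha0 (esym E).
- apply/lconcatP; exists w1, (m ++ upow u b ++ y); split => //.
    by rewrite Hx -!catA.
  rewrite Hw2 in h2; apply: (H2 a b) h2.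
    by clear -Ha Hb; lia.
  by clear -Ha Hb; lia.
- rewrite Hw1 in h1; rewrite Hw2 in h2.
  case: (leqP k1 i) => Hi; case: (leqP k2 j) => Hj.
  + have -> : b = k1 + (b - 1 - k1) + 1 by clear -Hi Hj Hij Ha Hb; lia.
    apply: (concat_mid Hu).
      by apply: (H1 i k1) h1.
    by apply: (H2 j) h2 => //; clear -Hi Hj Hij Ha Hb; lia.
  + have -> : b = (b - 1 - j) + j + 1 by clear -Hi Hj Hij Ha Hb; lia.
    apply: (concat_mid Hu) h2.
    by apply: (H1 i) h1 => //; clear -Hi Hj Hij Ha Hb; lia.
  + have -> : b = i + (b - 1 - i) + 1 by clear -Hi Hj Hij Ha Hb; lia.
    apply: (concat_mid Hu) h1 _.
    by apply: (H2 j) h2 => //; clear -Hi Hj Hij Ha Hb; lia.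
  + by clear -Hi Hj Hij Ha Hb; lia.
- apply/lconcatP; exists (x ++ upow u b ++ m), w2; split => //.
    by rewrite Hy -!catA.
  rewrite Hw1 in h1; apply: (H1 a b) h1.
    by clear -Ha Hb; lia.
  by clear -Ha Hb; lia.
Qed.


Definition cong (A : finType) (T : Type) (f : seq A -> T) : Prop :=
  forall u u' v, f u = f u' -> f (v ++ u) = f (v ++ u') /\ f (u ++ v) = f (u' ++ v).

Definition fib (A : finType) (C : lclass A) (T : eqType) (f : seq A -> T) : Prop :=
  forall t, C (fun w => f w == t).

Definition good (A : finType) (C : lclass A) (L : lang A) : Prop :=
  exists (T : finType) (f : seq A -> T) (k : nat),
    [/\ cong f, fib C f & forall u, f (u ++ u) = f u -> Qp L k u].

Lemma C_const (A : finType) (C : lclass A) (HC : prevariety C) (b : bool) :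
  C (fun _ => b).
Proof.
case: HC => [_ [H0 [H1 _]]]; case: b; [exact: H1 | exact: H0].
Qed.

Lemma C_all (A : finType) (C : lclass A) (HC : prevariety C) (I : Type) (s : seq I)
  (P : I -> lang A) : (forall i, C (P i)) -> C (fun w => all (fun i => P i w) s).
Proof.
move=> HP; elim: s => [|i s IH] /=; first exact: C_const.
case: HC => [_ [_ [_ [_ [HI _]]]]].
exact: (HI _ _ (HP i) IH).
Qed.

Lemma C_has (A : finType) (C : lclass A) (HC : prevariety C) (I : Type) (s : seq I)
  (P : I -> lang A) : (forall i, C (P i)) -> C (fun w => has (fun i => P i w) s).
Proof.
move=> HP; elim: s => [|i s IH] /=; first exact: C_const.
case: HC => [_ [_ [_ [HU _]]]].
exact: (HU _ _ (HP i) IH).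
Qed.

Lemma pair_ok (A : finType) (C : lclass A) (HC : prevariety C)
  (T1 T2 : finType) (f1 : seq A -> T1) (f2 : seq A -> T2) :
  cong f1 -> fib C f1 -> cong f2 -> fib C f2 ->
  let f := fun w => (f1 w, f2 w) in
  [/\ cong f, fib C f & forall u, f (u ++ u) = f u -> f1 (u ++ u) = f1 u /\ f2 (u ++ u) = f2 u].
Proof.
move=> c1 b1 c2 b2 f; split.
- move=> u u' v [/c1 h1 /c2 h2]; rewrite /f.
  by case: (h1 v) => -> ->; case: (h2 v) => -> ->.
- case=> t1 t2.
  have -> : (fun w => f w == (t1, t2)) = linter (fun w => f1 w == t1) (fun w => f2 w == t2).
    by apply: functional_extensionality => w; rewrite /f /linter xpair_eqE.
  case: HC => [_ [_ [_ [_ [HI _]]]]]; exact: HI.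
- by move=> u [].
Qed.

Lemma good_base (A : finType) (C : lclass A) (HC : prevariety C) L : C L -> good C L.
Proof.
move=> CL; have := HC; case=> [Hreg [_ [_ [_ [_ [Hc Hq']]]]]].
have [Q [q0 [delta [F HL]]]] := Hreg L CL.
pose run q w := foldl delta q w.
pose real (p : Q * {set Q}) := exists x y, run q0 x = p.1 /\ p.2 = [set q | F (run q y)].
pose Rb p := if excluded_middle_informative (real p) then true else false.
have RbP : forall p, reflect (real p) (Rb p).
  by move=> p; rewrite /Rb; case: excluded_middle_informative => h; constructor.
pose f (w : seq A) : {ffun Q * {set Q} -> bool} := [ffun p : Q * {set Q} => Rb p && (run p.1 w \in p.2)].
have Hcong : cong f.
  move=> u u' v E.
  have Ep : forall p, Rb p -> (run p.1 u \in p.2) = (run p.1 u' \in p.2).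
    by move=> p hp; have := congr1 (fun g : {ffun Q * {set Q} -> bool} => g p) E; rewrite /f !ffunE hp.
  split; apply/ffunP => -[q S]; rewrite /f !ffunE /=;
    case: (RbP (q, S)) => //= -[x [y [/= Hq HS]]].
  + rewrite /run !foldl_cat; apply: (Ep (run q v, S)).
    apply/RbP; exists (x ++ v), y; split => //=.
    by rewrite /run foldl_cat; rewrite /run in Hq; rewrite Hq.
  + rewrite /run !foldl_cat.
    have := Ep (q, [set q' | run q' v \in S]); rewrite /= !inE; apply.
    apply/RbP; exists x, (v ++ y); split => //=.
    by apply/setP => q'; rewrite !inE HS inE /run foldl_cat.
have Hfib : fib C f.
  move=> g.
  have -> : (fun w => f w == g) =
     (fun w => all (fun p => (Rb p && (run p.1 w \in p.2)) == g p) (enum {: Q * {set Q} })).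
    apply: functional_extensionality => w; apply/eqP/allP.
      by move=> <- p _; rewrite /f ffunE eqxx.
    move=> H; apply/ffunP => p; rewrite /f ffunE; apply/eqP; apply: H.
    by rewrite mem_enum.
  apply: (C_all HC) => -[q S]; case: (RbP (q, S)) => /= [[x [y [/= Hq HS]]]|_];
    last exact: C_const.
  have -> : (fun w => (run q w \in S) == g (q, S)) =
     (if g (q, S) then lquotr (lquotl x L) y else lcompl (lquotr (lquotl x L) y)).
    apply: functional_extensionality => w.
    have -> : (run q w \in S) = L (x ++ w ++ y).
      by rewrite HS inE HL /run !foldl_cat -/(run q0 x) Hq.
    by case: (g (q, S)); rewrite /lcompl /lquotr /lquotl ?eqxx ?eqbF_neg.
  have CL' : C (lquotr (lquotl x L) y).
    by case: (Hq' y (lquotl x L) (proj1 (Hq' x L CL))).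
  by case: (g (q, S)) => //; apply: Hc.
exists {ffun Q * {set Q} -> bool}, f, 1; split => // u Hu.
have Hp : forall n, 0 < n -> f (upow u n) = f u.
  elim=> [//|[|n] IH] _; first by rewrite /upow /= cats0.
  rewrite upowS; have [E _] := Hcong _ _ u (IH (ltn0Sn _)).
  by rewrite E.
move=> a b x y Ha Hb.
have Ef : f (x ++ upow u a ++ y) = f (x ++ upow u b ++ y).
  have E : f (upow u a) = f (upow u b) by rewrite Hp // Hp.
  exact: (Hcong _ _ x (Hcong _ _ y E).2).1.
have HLf : forall w, L w = f w (q0, [set q | F q]).
  move=> w; rewrite /f ffunE.
  have -> : Rb (q0, [set q | F q]) = true.
    apply/RbP; exists [::], [::]; split => //=.
  by rewrite inE HL.
by rewrite !HLf Ef.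
Qed.

Lemma good_SF (A : finType) (C : lclass A) (HC : prevariety C) L : SF C L -> good C L.
Proof.
elim=> {L}.
- by move=> L; apply: good_base.
- move=> a; exists unit, (fun _ => tt), 2; split => //.
  + by case; exact: (C_const HC true).
  + by move=> u _; apply: Qp_letter.
- move=> L1 L2 _ [T1 [f1 [k1 [c1 b1 q1]]]] _ [T2 [f2 [k2 [c2 b2 q2]]]].
  have [c b h] := pair_ok HC c1 b1 c2 b2.
  exists (T1 * T2)%type, (fun w => (f1 w, f2 w)), (maxn k1 k2); split; [exact: c | exact: b |].
  by move=> u /h [/q1 ? /q2 ?]; apply: Qp_union.
- move=> L _ [T [f [k [c b q]]]].
  exists T, f, k; split => // u /q; exact: Qp_compl.
- move=> L1 L2 _ [T1 [f1 [k1 [c1 b1 q1]]]] _ [T2 [f2 [k2 [c2 b2 q2]]]].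
  have [c b h] := pair_ok HC c1 b1 c2 b2.
  exists (T1 * T2)%type, (fun w => (f1 w, f2 w)), (k1 + k2 + 1); split; [exact: c | exact: b |].
  by move=> u /h [/q1 ? /q2 ?]; apply: Qp_concat.
Qed.

Lemma good_seq (A : finType) (C : lclass A) (HC : prevariety C) (I : eqType)
  (P : I -> lang A) (s : seq I) : (forall i, good C (P i)) ->
  exists (T : finType) (f : seq A -> T) (k : nat),
    [/\ cong f, fib C f & forall u, f (u ++ u) = f u -> forall i, i \in s -> Qp (P i) k u].
Proof.
move=> HP; elim: s => [|i s [T1 [f1 [k1 [c1 b1 q1]]]]].
  exists unit, (fun _ => tt), 0; split => //.
  by case; exact: (C_const HC true).
have [T2 [f2 [k2 [c2 b2 q2]]]] := HP i.
have [c b h] := pair_ok HC c1 b1 c2 b2.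
exists (T1 * T2)%type, (fun w => (f1 w, f2 w)), (maxn k1 k2); split; [exact: c | exact: b |].
move=> u /h [/q1 h1 /q2 h2] j; rewrite inE => /orP [/eqP ->|hj].
  exact: Qp_mono (leq_maxr _ _) h2.
exact: Qp_mono (leq_maxl _ _) (h1 j hj).
Qed.

Lemma build (A : finType) (C : lclass A) (HC : prevariety C) (T : finType)
  (f : seq A -> T) : cong f -> fib C f ->
  exists (N : finType) (nmul : N -> N -> N) (none : N) (eta : seq A -> N),
    [/\ monoid_laws nmul none, is_morphism_of C nmul none eta &
        forall u, nmul (eta u) (eta u) = eta u -> f (u ++ u) = f u].
Proof.
move=> Hc Hf.
pose Pb t := if excluded_middle_informative (exists w, f w = t) then true else false.
have PbP : forall t, reflect (exists w, f w = t) (Pb t).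
  by move=> t; rewrite /Pb; case: excluded_middle_informative => h; constructor.
pose N := {t : T | Pb t}.
have Pbf : forall w, Pb (f w) by move=> w; apply/PbP; exists w.
pose eta w : N := exist _ (f w) (Pbf w).
pose rep (n : N) : seq A :=
  proj1_sig (constructive_indefinite_description _ (elimT (PbP _) (proj2_sig n))).
have rep_spec : forall n, f (rep n) = val n.
  by move=> n; rewrite /rep; case: constructive_indefinite_description.
have eta_rep : forall n, eta (rep n) = n by move=> n; apply: val_inj; rewrite /= rep_spec.
pose nmul (n1 n2 : N) := eta (rep n1 ++ rep n2).
have nmul_eta : forall u v, nmul (eta u) (eta v) = eta (u ++ v).
  move=> u v; apply: val_inj => /=.
  rewrite (Hc _ u (rep (eta v)) (rep_spec (eta u))).2.
  exact: (Hc _ v u (rep_spec (eta v))).1.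
exists N, nmul, (eta [::]), eta; split.
- split.
  + by move=> x y z; rewrite -[x]eta_rep -[y]eta_rep -[z]eta_rep !nmul_eta catA.
  + by move=> x; rewrite -[x]eta_rep nmul_eta.
  + by move=> x; rewrite -[x]eta_rep nmul_eta cats0.
- split; [by [] | by move=> u v; rewrite nmul_eta | by move=> m; exists (rep m) | ].
  + move=> F.
    have -> : (fun w => eta w \in F) = (fun w => has (fun t => f w == t) (map val (enum F))).
      apply: functional_extensionality => w; apply/idP/hasP.
        by move=> h; exists (val (eta w)) => //; apply: map_f; rewrite mem_enum.
      case=> t /mapP [n hn ->] /eqP E.
      have -> : eta w = n by apply: val_inj.
      by rewrite -mem_enum.
    exact: (C_has HC).
- by move=> u; rewrite nmul_eta => /(congr1 val).
Qed.


Lemma mpowD (M : finType) (mul : M -> M -> M) (one : M) (HM : monoid_laws mul one) s a b :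
  mpow mul one s (a + b) = mul (mpow mul one s a) (mpow mul one s b).
Proof.
case: HM => Ha Hl _; elim: a => [|a IH]; first by rewrite add0n /= Hl.
rewrite addSn.
change (mul s (mpow mul one s (a + b)) = mul (mul s (mpow mul one s a)) (mpow mul one s b)).
by rewrite IH Ha.
Qed.

Lemma pow_stable (M : finType) (mul : M -> M -> M) (one : M) (HM : monoid_laws mul one)
  s k w : 0 < w ->
  mul (mpow mul one s w) (mpow mul one s w) = mpow mul one s w ->
  mpow mul one s k.+1 = mpow mul one s k -> mpow mul one s w.+1 = mpow mul one s w.
Proof.
move=> Hw Hid Hk.
have St : forall n, k <= n -> mpow mul one s n.+1 = mpow mul one s n.
  move=> n hn; have -> : n.+1 = (n - k) + k.+1 by lia.
  by rewrite mpowD // Hk -mpowD // subnK.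
have Id : forall m, mpow mul one s (w * m.+1) = mpow mul one s w.
  elim=> [|m IH]; first by rewrite muln1.
  by rewrite mulnS mpowD // IH Hid.
have -> : mpow mul one s w.+1 = mul s (mpow mul one s w) by [].
rewrite -(Id k).
change (mpow mul one s (w * k.+1).+1 = mpow mul one s (w * k.+1)).
by apply: St; clear -Hw; nia.
Qed.

Theorem proposition3p3 (A : finType) (C : lclass A) (HC : prevariety C)
  (M : finType) (mul : M -> M -> M) (one : M) (HM : monoid_laws mul one)
  (alpha : seq A -> M) (Halpha : is_morphism_of (SF C) mul one alpha)
  (omega : nat) (Homega_pos : 0 < omega)
  (Homega : forall s : M,
     mul (mpow mul one s omega) (mpow mul one s omega) = mpow mul one s omega) :
  exists (N : finType) (nmul : N -> N -> N) (none : N) (eta : seq A -> N),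
    [/\ monoid_laws nmul none,
        is_morphism_of C nmul none eta &
        forall u : seq A, nmul (eta u) (eta u) = eta u ->
          mpow mul one (alpha u) omega.+1 = mpow mul one (alpha u) omega].
Proof.
case: Halpha => H1 H2 H3 H4.
have [T [f [k [c b h]]]] := good_seq HC (P := fun m : M => fun w => alpha w \in [set m])
  (enum M) (fun m => good_SF HC (H4 [set m])).
have [N [nmul [none [eta [HN Heta Hid]]]]] := build HC c b.
exists N, nmul, none, eta; split => // u /Hid /h Hq.
have Hp : forall n, alpha (upow u n) = mpow mul one (alpha u) n.
  by elim=> [|n IH] //=; rewrite -/(upow u n) H2 IH.
apply: (pow_stable HM (k := k)) => //.
have := Hq (alpha (upow u k)) (mem_enum _ _) k k.+1 [::] [::] (leqnn _) (leqnSn _).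
rewrite /= !cats0 inE eqxx => /(_ isT); rewrite inE => /eqP.
by rewrite H2 !Hp.
Qed.
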